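(* (Zig Zag Lemma.) Let $\sigma : X^* \to M$ be a monoid choice of generators for a monoid $M$, let $x, y \in M$, let $n \geq 1$ and let $u_0, \dots, u_{n-1}, v_1, \dots, v_n \in X^*$. Then the following are equivalent: (i) the loop automaton of $M$ with respect to $\sigma$ has a path from $x$ to $y$ labelled $u_0 \overline{v_1} u_1 \overline{v_2} \cdots u_{n-1}\overline{v_n}$; (ii) there exist $p_0, \dots, p_n \in M$ with $p_0 = x$, $p_n = y$, and $p_i(u_i\sigma) = p_{i+1}(v_{i+1}\sigma)$ for $0 \leq i < n$.
   Context: Maps are written on the right. $X^*$ is the free monoid on $X$; a choice of generators is a surjective monoid morphism. Let $\overline{X} = \{\overline{x} : x \in X\}$ be new symbols, $\hat{X} = X \cup \overline{X}$, and extend $x \mapsto \overline{x}$ to an involution of $\hat{X}^*$ by $\overline{\overline{x}} = x$, $\overline{x_1\cdots x_n} = \overline{x_n}\cdots\overline{x_1}$. The loop automaton of $M$ w.r.t. $\sigma$ is the directed labelled graph with vertex set $M$ having, for each $a \in M$, $x \in X$, an edge $a \to a(x\sigma)$ labelled $x$ and an edge $a(x\sigma) \to a$ labelled $\overline{x}$; path labels are concatenations of edge labels. *)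

(* Defs.v *)
From mathcomp Require Import all_boot.
Set Implicit Arguments. Unset Strict Implicit. Unset Printing Implicit Defensive.

Record monoid := Monoid {
  mcar :> Type;
  mmul : mcar -> mcar -> mcar;
  mone : mcar;
  mmulA : forall a b c, mmul a (mmul b c) = mmul (mmul a b) c;
  mmul1 : forall a, mmul mone a = a;
  mmul1r : forall a, mmul a mone = a }.

(* Free monoid X^* = seq X (concatenation, unit [::]).  A monoid choice of
   generators is a surjective monoid morphism sigma : X^* -> M. *)
Definition choice_of_generators (X : Type) (M : monoid) (sigma : seq X -> M) :=
  [/\ sigma [::] = mone M,
      (forall u v, sigma (u ++ v) = mmul (sigma u) (sigma v))
    & forall m : M, exists u, sigma u = m].

(* hat X = X + bar X: inl x is x, inr x is bar x. *)
Definition hletter (X : Type) := (X + X)%type.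

Definition bar_letter (X : Type) (l : hletter X) : hletter X :=
  match l with inl x => inr x | inr x => inl x end.

Definition bar_word (X : Type) (w : seq (hletter X)) : seq (hletter X) :=
  rev (map (@bar_letter X) w).

Definition emb (X : Type) (u : seq X) : seq (hletter X) := map inl u.

(* Edges of the loop automaton (maps on the right: a(x sigma) = a * sigma[x]):
   a --x--> a(x sigma)  and  a(x sigma) --bar x--> a. *)
Definition loop_edge (X : Type) (M : monoid) (sigma : seq X -> M)
  (a : M) (l : hletter X) (b : M) : Prop :=
  match l with
  | inl x => b = mmul a (sigma [:: x])
  | inr x => a = mmul b (sigma [:: x])
  end.

Inductive loop_path (X : Type) (M : monoid) (sigma : seq X -> M)
  : M -> seq (hletter X) -> M -> Prop :=
| lp_nil : forall a, loop_path sigma a [::] a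
| lp_cons : forall a l b w c,
    loop_edge sigma a l b -> loop_path sigma b w c -> loop_path sigma a (l :: w) c.

(* The zig-zag label u_0 bar(v_1) u_1 bar(v_2) ... u_{n-1} bar(v_n). *)
Definition zigzag (X : Type) (n : nat) (u v : nat -> seq X) : seq (hletter X) :=
  flatten [seq emb (u i) ++ bar_word (emb (v i.+1)) | i <- iota 0 n].

(* Main.v *)
Require Import Defs.
From mathcomp Require Import all_boot.

Section S.
Variables (X : Type) (M : monoid) (sigma : seq X -> M).
Hypothesis hsigma : choice_of_generators sigma.

Lemma path_cat a w1 w2 c :
  loop_path sigma a (w1 ++ w2) c <->
  exists b, loop_path sigma a w1 b /\ loop_path sigma b w2 c.
Proof.
split.
- elim: w1 a => [|l w1 IH] a /=.
    by move=> H; exists a; split => //; constructor.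
  move=> H; inversion H; subst.
  have [b' [H1 H2]] := IH _ H5.
  by exists b'; split => //; econstructor; eauto.
- move=> [b [H1 H2]]; elim: H1 H2 => //= a0 l b0 w c0 He Hp IH H2.
  by econstructor; eauto.
Qed.

Lemma sigma_cons x u : sigma (x :: u) = mmul (sigma [:: x]) (sigma u).
Proof. by case: hsigma => _ h _; rewrite -h. Qed.

Lemma path_emb a u b : loop_path sigma a (emb u) b <-> b = mmul a (sigma u).
Proof.
case: hsigma => h0 _ _.
elim: u a b => [|x u IH] a b /=.
  rewrite h0 mmul1r; split; first by move=> H; inversion H.
  by move=> ->; constructor.
rewrite sigma_cons mmulA; split.
  move=> H; inversion H as [|a' l b' w c' He Hp]; subst.
  by move: He => /= He; subst; exact: ((IH _ _).1 Hp).
by move=> ->; apply: (lp_cons (b:=mmul a (sigma [:: x]))) => //; exact/(IH _ _).2.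
Qed.

Lemma path_bar a v b :
  loop_path sigma a (bar_word (emb v)) b <-> a = mmul b (sigma v).
Proof.
case: hsigma => h0 _ _.
rewrite /bar_word /emb -map_comp.
elim: v a b => [|x v IH] a b /=.
  rewrite h0 mmul1r; split; first by move=> H; inversion H.
  by move=> ->; constructor.
rewrite rev_cons -cats1 sigma_cons mmulA; split.
  move=> /path_cat [c [H1 H2]]; inversion H2 as [|a' l b' w c' He Hp]; subst.
  inversion Hp; subst.
  by move: He => /= He; subst; exact: ((IH _ _).1 H1).
move=> ->; apply/path_cat; exists (mmul b (sigma [:: x])); split; first exact/(IH _ _).2.
by apply: (lp_cons (b:=b)) => //; constructor.
Qed.

Lemma zigzagS n (u v : nat -> seq X) :
  zigzag n.+1 u v = zigzag n u v ++ (emb (u n) ++ bar_word (emb (v n.+1))).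
Proof.
by rewrite /zigzag -addn1 iotaD map_cat flatten_cat /= cats0 add0n addn1.
Qed.

Lemma main_gen x (u v : nat -> seq X) n : forall y,
  loop_path sigma x (zigzag n u v) y <->
  exists p : nat -> M,
    [/\ p 0 = x, p n = y &
        forall i, i < n -> mmul (p i) (sigma (u i)) = mmul (p i.+1) (sigma (v i.+1))].
Proof.
elim: n => [|n IH] y.
  rewrite /zigzag /=; split.
    by move=> H; inversion H; subst; exists (fun _ => y); split.
  by move=> [p [<- <- _]]; constructor.
rewrite zigzagS; split.
  move=> /path_cat [b [Hb]] /path_cat [c [/path_emb Hc /path_bar Hy]].
  have [p [p0 pn hp]] := (IH b).1 Hb.
  exists (fun i => if i == n.+1 then y else p i); split => //=.
    by rewrite eqxx.
  move=> i; rewrite ltnS leq_eqVlt => /orP [/eqP ->|hi].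
    by rewrite eqxx (ltn_eqF (ltnSn n)) pn -Hc.
  by rewrite (ltn_eqF (leqW hi)) eqSS (ltn_eqF hi) hp.
move=> [p [p0 pn hp]]; apply/path_cat; exists (p n); split.
  by apply/IH; exists p; split => // i hi; apply: hp; apply: ltnW.
apply/path_cat; exists (mmul (p n) (sigma (u n))); split; first by apply/path_emb.
by apply/path_bar; rewrite -pn; apply: hp.
Qed.

End S.

Theorem lemma4p1 (X : Type) (M : monoid) (sigma : seq X -> M)
  (hsigma : choice_of_generators sigma) (x y : M) (n : nat) (hn : 1 <= n)
  (u v : nat -> seq X) :
  loop_path sigma x (zigzag n u v) y <->
  exists p : nat -> M,
    [/\ p 0 = x, p n = y &
        forall i, i < n -> mmul (p i) (sigma (u i)) = mmul (p i.+1) (sigma (v i.+1))].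
Proof. exact: main_gen. Qed.
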